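(* For any graph $F$ on $y\ge 1$ vertices and any real $\lambda>0$, \[ \frac{\lambda Z_F'(\lambda)}{Z_F(\lambda)}\ \ge\ \frac{\log Z_F(\lambda)}{K\bigl(y\lambda/\log Z_F(\lambda)\bigr)}. \]
   Context: $\log$ is the natural logarithm. For a graph $F$, $Z_F(\lambda)=\sum_{I}\lambda^{|I|}$ where the sum is over all independent sets $I$ of $F$ (including $\varnothing$), and $Z_F'$ is its derivative in $\lambda$. $W_{-1}$ denotes the lower (negative real) branch of the Lambert $W$-function, i.e. the inverse of $x\mapsto xe^x$ on $(-\infty,-1]$, defined on $[-1/e,0)$. $K:[1,\infty)\to[1,\infty)$ is $K(y)=-W_{-1}(-1/(ey))$; equivalently, for $y\ge1$, $x=1/(eyK(y))$ is the solution in $(0,1/e]$ of $x\log(1/x)=1/(ey)$. (Note $y\lambda/\log Z_F(\lambda)\ge1$ since $Z_F(\lambda)\le(1+\lambda)^y$.) *)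

(* Defs.v *)
From mathcomp Require Import ssreflect ssrfun ssrbool eqtype ssrnat seq choice fintype finset bigop.
From Stdlib Require Import Reals ClassicalEpsilon.

Set Implicit Arguments.
Unset Strict Implicit.

(* A simple graph on vertex set 'I_n is a symmetric irreflexive relation e. *)
Definition independent (n : nat) (e : rel 'I_n) (S : {set 'I_n}) : bool :=
  [forall x in S, forall y in S, ~~ e x y].

Definition Zpoly (n : nat) (e : rel 'I_n) (lam : R) : R :=
  \big[Rplus/R0]_(S : {set 'I_n} | independent e S) (lam ^ #|S|)%R.

(* Lower branch W_{-1} of the Lambert W function on [-1/e,0):
   the unique w <= -1 with w * exp w = z. *)
Definition LambertWm1 (z : R) : R :=
  epsilon (inhabits R0) (fun w : R => (w <= -1 /\ w * exp w = z)%R).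

Definition Kfun (y : R) : R := (- LambertWm1 (- / (exp 1 * y)))%R.

(* Main.v *)
Require Import Defs.
From mathcomp Require Import ssreflect ssrfun ssrbool eqtype ssrnat seq choice fintype finset bigop.
From Stdlib Require Import Reals.
From HB Require Import structures.
From Stdlib Require Import Lra ClassicalEpsilon.
Local Open Scope R_scope.

Local Open Scope R_scope.
Lemma RaddA : associative Rplus. Proof. move=> x y z; ring. Qed.
Lemma RmulA : associative Rmult. Proof. move=> x y z; ring. Qed.
Lemma RaddC : commutative Rplus. Proof. move=> x y; ring. Qed.
Lemma RmulC : commutative Rmult. Proof. move=> x y; ring. Qed.
Lemma Radd0 : left_id R0 Rplus. Proof. move=> x; ring. Qed.
Lemma Rmul1 : left_id R1 Rmult. Proof. move=> x; ring. Qed.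
HB.instance Definition _ := Monoid.isComLaw.Build R R0 Rplus RaddA RaddC Radd0.
HB.instance Definition _ := Monoid.isComLaw.Build R R1 Rmult RmulA RmulC Rmul1.
Lemma Rmul0l : left_zero R0 Rmult. Proof. move=> x; ring. Qed.
Lemma Rmul0r : right_zero R0 Rmult. Proof. move=> x; ring. Qed.
HB.instance Definition _ := Monoid.isMulLaw.Build R R0 Rmult Rmul0l Rmul0r.
Lemma RmulDl : left_distributive Rmult Rplus. Proof. move=> x y z; ring. Qed.
Lemma RmulDr : right_distributive Rmult Rplus. Proof. move=> x y z; ring. Qed.
HB.instance Definition _ := Monoid.isAddLaw.Build R Rmult Rplus RmulDl RmulDr.

Section S.
Variables (I : Type) (r : seq I) (P : pred I).

Lemma sum_le (F G : I -> R) : (forall i, P i -> F i <= G i) ->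
  \big[Rplus/R0]_(i <- r | P i) F i <= \big[Rplus/R0]_(i <- r | P i) G i.
Proof.
move=> H; elim: r => [|a s IH]; rewrite ?big_nil ?big_cons; first lra.
case Pa: (P a) => //; have := H a Pa; lra.
Qed.

Lemma sum_lin (F G : I -> R) (a b c : R) :
  \big[Rplus/R0]_(i <- r | P i) (a * (F i + b * G i - c * F i)) =
  a * (\big[Rplus/R0]_(i <- r | P i) F i + b * \big[Rplus/R0]_(i <- r | P i) G i
        - c * \big[Rplus/R0]_(i <- r | P i) F i).
Proof.
elim: r => [|x s IH]; rewrite ?big_nil ?big_cons; first ring.
case: (P x) => //; rewrite IH; ring.
Qed.

Lemma sum_scal (F : I -> R) (a : R) :
  a * \big[Rplus/R0]_(i <- r | P i) F i = \big[Rplus/R0]_(i <- r | P i) (a * F i).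
Proof.
elim: r => [|x s IH]; rewrite ?big_nil ?big_cons; first ring.
case: (P x) => //; rewrite -IH; ring.
Qed.

Lemma sum_ge0 (F : I -> R) : (forall i, P i -> 0 <= F i) ->
  0 <= \big[Rplus/R0]_(i <- r | P i) F i.
Proof.
move=> H; elim: r => [|a s IH]; rewrite ?big_nil ?big_cons; first lra.
case Pa: (P a) => //; have := H a Pa; lra.
Qed.

Lemma sum_subP (Q : pred I) (F : I -> R) : (forall i, 0 <= F i) ->
  (forall i, P i -> Q i) ->
  \big[Rplus/R0]_(i <- r | P i) F i <= \big[Rplus/R0]_(i <- r | Q i) F i.
Proof.
move=> H0 H; elim: r => [|a s IH]; rewrite ?big_nil ?big_cons; first lra.
case Pa: (P a); first by rewrite (H a Pa); lra.
case: (Q a) => //; have := H0 a; lra.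
Qed.

Lemma sum_deriv (n : I -> nat) (x : R) :
  derivable_pt_lim (fun t => \big[Rplus/R0]_(i <- r | P i) t ^ n i) x
     (\big[Rplus/R0]_(i <- r | P i) (INR (n i) * x ^ (n i).-1)).
Proof.
elim: r => [|a s IH].
  have -> : (fun t => \big[Rplus/R0]_(i <- [::] | P i) t ^ n i) = fun _ => 0.
    by apply: FunctionalExtensionality.functional_extensionality => t; rewrite big_nil.
  rewrite big_nil; exact: derivable_pt_lim_const.
have -> : (fun t => \big[Rplus/R0]_(i <- a :: s | P i) t ^ n i) =
   fun t => (if P a then t ^ n a else 0) + \big[Rplus/R0]_(i <- s | P i) t ^ n i.
  apply: FunctionalExtensionality.functional_extensionality => t; rewrite big_cons.
  case: (P a) => //; ring.
rewrite big_cons; case: (P a).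
  apply: derivable_pt_lim_plus => //; exact: derivable_pt_lim_pow.
have -> : \big[Rplus/R0]_(j <- s | P j) (INR (n j) * x ^ (n j).-1) =
   0 + \big[Rplus/R0]_(j <- s | P j) (INR (n j) * x ^ (n j).-1) by ring.
apply: derivable_pt_lim_plus => //; exact: derivable_pt_lim_const.
Qed.
End S.
Lemma iter_pow (x : R) n : iter n (Rmult x) 1 = x ^ n.
Proof. by elim: n => //= n ->. Qed.

Lemma sum_sets y (mu : R) :
  \big[Rplus/R0]_(S : {set 'I_y}) mu ^ #|S| = (mu + 1) ^ y.
Proof.
have E : \big[Rmult/R1]_(i:'I_y) (mu + 1) = \big[Rplus/R0]_(J in {set 'I_y}) \big[Rmult/R1]_i (if i \in J then mu else 1)
  by exact: bigA_distr.
move: E; rewrite big_const card_ord iter_pow => ->.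
apply: eq_big => // S _.
rewrite -big_mkcond /= big_const iter_pow //.
Qed.
Lemma ln_le' x y : 0 < x -> x <= y -> ln x <= ln y.
Proof.
intros Hx [H|H]; [left; apply ln_increasing; auto | subst; lra].
Qed.

Lemma Kspec u : 1 <= u -> 1 <= Kfun u /\ ln (Kfun u) = Kfun u - 1 - ln u.
Proof.
intros Hu.
assert (He : 0 < exp 1) by apply exp_pos.
assert (He1 : 1 < exp 1) by (pose proof (exp_ineq1 1 ltac:(lra)); lra).
set z := (- / (exp 1 * u)).
assert (Hex : exists w, w <= -1 /\ w * exp w = z).
{ set K := 4 * exp 1 * u.
  assert (HK : 1 <= K) by (unfold K; nra).
  assert (Hcont : continuity (fun w => z - w * exp w)).
  { apply continuity_minus; [apply continuity_const; intros ??; reflexivity|].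
    apply continuity_mult; [apply derivable_continuous, derivable_id | apply derivable_continuous, derivable_exp]. }
  destruct (IVT_cor (fun w => z - w * exp w) (-K) (-1) Hcont) as [w [Hw1 Hw2]].
  - lra.
  - assert (A : z - - K * exp (- K) <= 0).
    { rewrite exp_Ropp. unfold z.
      assert (E2 : exp K = exp (K/2) * exp (K/2)) by (rewrite <- exp_plus; f_equal; field).
      assert (E3 : 1 + K/2 <= exp (K/2)) by apply exp_ineq1_le.
      assert (E4 : K * K / 4 <= exp K) by (rewrite E2; nra).
      assert (Hpos : 0 < exp K) by apply exp_pos.
      assert (Hu0 : 0 < exp 1 * u) by nra.
      assert (K * / exp K <= / (exp 1 * u)).
      { apply Rmult_le_reg_r with (exp K * (exp 1 * u)); [nra|].
        field_simplify; [|lra|lra].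
        unfold K in *. nra. }
      lra. }
    assert (B : 0 <= z - -1 * exp (-1)).
    { assert (Em : exp (-1) * exp 1 = 1) by (rewrite <- exp_plus; replace (-1+1) with 0 by ring; apply exp_0).
      assert (Ei : exp (-1) = / exp 1) by (apply (Rmult_eq_reg_r (exp 1)); [rewrite Em; field|]; lra).
      rewrite Ei. unfold z.
      assert (/ (exp 1 * u) <= / exp 1).
      { apply Rinv_le_contravar; nra. }
      lra. }
    nra.
  - exists w; split; [lra|]. lra. }
destruct (epsilon_spec (inhabits R0) _ Hex) as [H1 H2].
unfold Kfun; fold z. unfold LambertWm1 in *.
set w := epsilon _ _ in H1 H2 *.
split; [lra|].
assert (Hu0 : 0 < exp 1 * u) by nra.
assert (Ew : (- w) * exp w = / (exp 1 * u)) by (unfold z in H2; lra).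
assert (Hw : 0 < - w) by lra.
assert (Ln : ln (- w) + w = - 1 - ln u).
{ assert (A1 : ln ((- w) * exp w) = ln (- w) + w) by (rewrite ln_mult; [rewrite ln_exp; lra|lra|apply exp_pos]).
  rewrite Ew (ln_Rinv _ Hu0) (ln_mult _ _ He (ltac:(lra) : 0 < u)) ln_exp in A1; lra. }
lra.
Qed.
Lemma exp_pow_INR (mu : R) n : exp mu ^ n = exp (INR n * mu).
Proof.
elim: n => [|n IH]; first by rewrite /= Rmult_0_l exp_0.
rewrite [exp mu ^ _]/= IH -exp_plus S_INR; f_equal; ring.
Qed.

Lemma Zle y (e : rel 'I_y) mu : 0 <= mu -> Zpoly e mu <= exp (INR y * mu).
Proof.
move=> Hmu.
apply: Rle_trans (_ : (mu + 1) ^ y <= _).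
  rewrite -sum_sets /Zpoly; apply: sum_subP => // S; exact: pow_le.
rewrite -exp_pow_INR; apply: pow_incr; have := exp_ineq1_le mu; lra.
Qed.

Lemma Zge y (e : rel 'I_y) (Hy : (0 < y)%nat) lam : irreflexive e -> 0 < lam ->
  1 + lam <= Zpoly e lam.
Proof.
move=> Hirr Hlam.
have i0 : 'I_y := Ordinal Hy.
have I0 : independent e set0 by apply/forallP => x; apply/implyP; rewrite inE.
have I1 : independent e [set i0].
  apply/forallP => x; apply/implyP; rewrite inE => /eqP ->.
  apply/forallP => z; apply/implyP; rewrite inE => /eqP ->; by rewrite Hirr.
rewrite /Zpoly (bigD1 set0) //= (bigD1 [set i0]) /=; last first.
  rewrite I1 /=; apply/eqP => /setP /(_ i0); by rewrite !inE eqxx.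
rewrite cards0 cards1 /=.
have := @sum_ge0 _ (index_enum {set 'I_y})
   (fun S => independent e S && (S != set0) && (S != [set i0])) (fun S => lam ^ #|S|).
move=> H; have := H (fun S _ => pow_le _ _ (Rlt_le _ _ Hlam)).
move=> H2; rewrite Rmult_1_r; apply: Rplus_le_compat_l; rewrite -{1}(Rplus_0_r lam); apply: Rplus_le_compat_l; exact: H2.
Qed.
Definition S1 {y} (e : rel 'I_y) lam :=
  \big[Rplus/R0]_(S | independent e S) (INR #|S| * lam ^ #|S|).

Lemma Zderiv y (e : rel 'I_y) lam dZ :
  derivable_pt_lim (Zpoly e) lam dZ -> lam * dZ = S1 e lam.
Proof.
move=> H.
have D := @sum_deriv _ (index_enum {set 'I_y}) (independent e) (fun S => #|S|) lam.
rewrite (uniqueness_limite (Zpoly e) lam _ _ H D) sum_scal /S1.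
apply: eq_bigr => S _; case: #|S| => [|k] /=; first ring.
ring.
Qed.

Lemma Zjensen y (e : rel 'I_y) lam mu : 0 < lam -> 0 < mu -> 0 < Zpoly e lam ->
  exp (ln (mu / lam) * (S1 e lam / Zpoly e lam)) * Zpoly e lam <= Zpoly e mu.
Proof.
move=> Hl Hm HZ.
set c := ln (mu / lam); set a := S1 e lam / Zpoly e lam.
have Hr : 0 < mu / lam by apply: Rdiv_lt_0_compat.
apply: Rle_trans (_ : \big[Rplus/R0]_(S | independent e S)
   (exp (c * a) * (lam ^ #|S| + c * (INR #|S| * lam ^ #|S|) - (c * a) * lam ^ #|S|)) <= _).
  rewrite sum_lin -/(Zpoly e lam) -/(S1 e lam).
  have -> : S1 e lam = a * Zpoly e lam by rewrite /a; field; lra.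
  right; ring.
rewrite /Zpoly; apply: sum_le => S _.
have -> : mu ^ #|S| = lam ^ #|S| * exp (INR #|S| * c).
  have -> : exp (INR #|S| * c) = Rpower (mu / lam) (INR #|S|) by [].
  rewrite Rpower_pow // -Rpow_mult_distr; f_equal; field; lra.
have -> : exp (INR #|S| * c) = exp (c * a) * exp (INR #|S| * c - c * a).
  rewrite -exp_plus; f_equal; ring.
have E1 := exp_ineq1_le (INR #|S| * c - c * a).
have E2 : 0 <= lam ^ #|S| by apply: pow_le; lra.
have E3 := exp_pos (c * a).
have E4 : exp (c * a) * (1 + (INR #|S| * c - c * a)) <= exp (c * a) * exp (INR #|S| * c - c * a).
  by apply: Rmult_le_compat_l; lra.
have E5 := Rmult_le_compat_l _ _ _ E2 E4.
apply: Rle_trans (_ : lam ^ #|S| * (exp (c * a) * (1 + (INR #|S| * c - c * a))) <= _); first by right; ring.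
apply: Rle_trans E5 _; right; ring.
Qed.
Arguments Zge {y} e Hy {lam}.
Arguments Zle {y} e mu.
Arguments Zjensen {y} e {lam mu}.
Arguments Zderiv {y e lam dZ}.
Local Close Scope R_scope.
Theorem mainTheorem4 :
  forall (y : nat) (e : rel 'I_y),
    (1 <= y)%N -> symmetric e -> irreflexive e ->
    forall lam : R, (0 < lam)%R ->
    forall dZ : R, derivable_pt_lim (Zpoly e) lam dZ ->
    (lam * dZ / Zpoly e lam >=
       ln (Zpoly e lam) / Kfun (INR y * lam / ln (Zpoly e lam)))%R.
Proof.
move=> y e Hy Hsym Hirr lam Hl dZ HD.
Local Open Scope R_scope.
have HZ1 := Zge e Hy Hirr Hl.
rewrite (Zderiv HD).
set Z := Zpoly e lam in HZ1 *.
have HZ : 0 < Z by lra.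
set L := ln Z.
have HL : 0 < L by rewrite /L -ln_1; apply: ln_increasing; lra.
set a := S1 e lam / Z.
have Hy' : 0 < INR y by apply: lt_0_INR; apply/ltP.
have key : forall mu, 0 < mu -> L + a * (ln mu - ln lam) <= INR y * mu.
  move=> mu Hmu.
  have J := Zjensen e Hl Hmu HZ.
  have J2 := Zle e mu (Rlt_le _ _ Hmu).
  have J3 := Rle_trans _ _ _ J J2.
  have J4 := ln_le' _ _ (Rmult_lt_0_compat _ _ (exp_pos _) HZ) J3.
  rewrite ln_mult ?ln_exp in J4; [|exact: exp_pos|exact: HZ].
  rewrite /Rdiv ln_mult ?ln_Rinv in J4; [|lra|lra|by apply: Rinv_0_lt_compat].
  rewrite -/(Rdiv (S1 e lam) Z) -/a -/L in J4; lra.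
have HLle : L <= INR y * lam.
  have J := ln_le' _ _ HZ (Zle e lam (Rlt_le _ _ Hl)); rewrite ln_exp in J; exact: J.
set u := INR y * lam / L.
have Hu : 1 <= u.
  rewrite /u; apply: (Rmult_le_reg_r L) => //; rewrite /Rdiv Rmult_assoc Rinv_l; lra.
have [HK1 HK2] := Kspec _ Hu.
set K := Kfun u in HK1 HK2 *.
have Hlnu : ln u = ln (INR y) + ln lam - ln L.
  rewrite /u /Rdiv (ln_mult _ _ (Rmult_lt_0_compat _ _ Hy' Hl) (Rinv_0_lt_compat _ HL)) (ln_mult _ _ Hy' Hl) (ln_Rinv _ HL); ring.
apply: Rle_ge.
case: (Rle_lt_dec (L / K) a) => // Hlt; exfalso.
case: (Rle_lt_dec a 0) => Ha.
  set mu := L / (2 * INR y).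
  have Hmu : 0 < mu by rewrite /mu; apply: Rdiv_lt_0_compat; lra.
  have Hmul : mu < lam.
    rewrite /mu; apply: (Rmult_lt_reg_r (2 * INR y)); first lra.
    rewrite /Rdiv Rmult_assoc Rinv_l; lra.
  have Hln := ln_increasing _ _ Hmu Hmul.
  have := key mu Hmu.
  have -> : INR y * mu = L / 2 by rewrite /mu; field; lra.
  nra.
set mu := a / INR y.
have Hmu : 0 < mu by rewrite /mu; apply: Rdiv_lt_0_compat; lra.
have Kk := key mu Hmu.
have Ea : INR y * mu = a by rewrite /mu; field; lra.
rewrite Ea in Kk.
have Hlnmu : ln mu = ln a - ln (INR y).
  rewrite /mu /Rdiv (ln_mult _ _ (ltac:(lra) : 0 < a) (Rinv_0_lt_compat _ Hy')) (ln_Rinv _ Hy'); ring.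
rewrite Hlnmu in Kk.
set t := L / a.
have Ht : L = t * a by rewrite /t; field; lra.
have HtK : K < t.
  rewrite /t; apply: (Rmult_lt_reg_r a) => //.
  have : L / K * K = L by field; lra.
  have : L / a * a = L by field; lra.
  nra.
have Hlnt : ln t = ln L - ln a.
  rewrite /t /Rdiv (ln_mult _ _ HL (Rinv_0_lt_compat _ (ltac:(lra) : 0 < a))) (ln_Rinv _ (ltac:(lra) : 0 < a)); ring.
have Kk2 : t + (ln a - ln (INR y) - ln lam) <= 1.
  apply: (Rmult_le_reg_l a) => //; nra.
have Hs : 0 < ln t - ln K by have := ln_increasing K t ltac:(lra) HtK; lra.
have Es : exp (ln t - ln K) = t / K.
  rewrite exp_plus exp_Ropp !exp_ln //; lra.
have E1 := exp_ineq1 (ln t - ln K) ltac:(lra).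
rewrite Es in E1.
have E2 : t / K - 1 <= t - K.
  have : t / K = t - (t - K) * (1 - / K) - K + 1 by field; lra.
  have : 0 <= 1 - / K.
    have : / K <= 1 by rewrite -Rinv_1; apply: Rinv_le_contravar; lra.
    lra.
  nra.
lra.
Qed.
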